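(* Let $A$ be a bounded linear operator on a complex Hilbert space $\mathcal{H}$ whose numerical range $W(A) = \{\langle Ax, x\rangle : x \in \mathcal{H}, \|x\| = 1\}$ is elliptical, i.e. (up to closure) $W(A)$ is a region in $\mathbb{C}$ bounded by an ellipse. Then \[ \|A^*A - AA^*\| \le \frac{4}{\pi}\, S(W(A)), \] where $S(W(A))$ denotes the area (planar Lebesgue measure) of $W(A)$. *)

(* Defs.v *)
From HB Require Import structures.
From mathcomp Require Import all_boot all_order all_algebra.
From mathcomp Require Import all_classical all_reals all_analysis.
From mathcomp Require Import complex.
Set Implicit Arguments. Unset Strict Implicit. Unset Printing Implicit Defensive.
Import Order.TTheory GRing.Theory Num.Theory numFieldNormedType.Exports.
Local Open Scope classical_set_scope.
Local Open Scope ring_scope.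
Local Open Scope complex_scope.

Section Hilbert.
Variables (R : realType) (H : lmodType R[i]) (ip : H -> H -> R[i]).

Definition hnorm (x : H) : R := Num.sqrt (complex.Re (ip x x)).

Definition is_inner_product : Prop :=
  [/\ (forall (a : R[i]) (x y z : H), ip (a *: x + y) z = a * ip x z + ip y z),
      (forall x y : H, ip y x = conjc (ip x y)),
      (forall x : H, 0 <= ip x x) &
      (forall x : H, ip x x = 0 -> x = 0)].

Definition is_complete : Prop :=
  forall u : nat -> H,
    (forall e : R, 0 < e -> exists N : nat, forall m n : nat,
        (N <= m)%N -> (N <= n)%N -> hnorm (u m - u n) < e) ->
    exists l : H, forall e : R, 0 < e -> exists N : nat, forall n : nat,
        (N <= n)%N -> hnorm (u n - l) < e.

Definition is_hilbert : Prop := is_inner_product /\ is_complete.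

Definition bounded_op (A : H -> H) : Prop :=
  exists M : R, forall x : H, hnorm (A x) <= M * hnorm x.

Definition is_adjoint (A B : H -> H) : Prop :=
  forall x y : H, ip (A x) y = ip x (B y).

Definition opnorm (T : H -> H) : R :=
  sup [set hnorm (T x) | x in [set x : H | hnorm x <= 1]].

Definition numerical_range (A : H -> H) : set R[i] :=
  [set ip (A x) x | x in [set x : H | hnorm x = 1]].
End Hilbert.

Definition toR2 (R : realType) (z : R[i]) : R * R := (complex.Re z, complex.Im z).

(* closed region bounded by an ellipse with center (cx,cy), semi-axes a,b > 0,
   rotated by the angle whose (cos, sin) is (p, q) *)
Definition ellipse_region (R : realType) (cx cy a b p q : R) : set (R * R) :=
  [set z | exists x y : R, (x / a) ^+ 2 + (y / b) ^+ 2 <= 1 /\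
           z = (cx + p * x - q * y, cy + q * x + p * y)].

Definition elliptical (R : realType) (W : set R[i]) : Prop :=
  exists cx cy a b p q : R, [/\ 0 < a, 0 < b, p ^+ 2 + q ^+ 2 = 1 &
    closure (@toR2 R @` W) = ellipse_region cx cy a b p q].

(* planar Lebesgue measure (area) of W; since the boundary of an ellipse is
   null, we measure the (Borel) closure of W *)
Definition area (R : realType) (W : set R[i]) : \bar R :=
  ((@lebesgue_measure R) \x (@lebesgue_measure R))%E (closure (@toR2 R @` W)).

(* Main.v *)
Require Import Defs.
From HB Require Import structures.
From mathcomp Require Import all_boot all_order all_algebra.
From mathcomp Require Import all_classical all_reals all_analysis.
From mathcomp Require Import complex.
From mathcomp Require Import ring lra.
Import Order.TTheory GRing.Theory Num.Theory.
Local Open Scope ring_scope.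

Module T1.
Set Implicit Arguments. Unset Strict Implicit. Unset Printing Implicit Defensive.
Import numFieldNormedType.Exports.
Local Open Scope ring_scope.
Local Open Scope complex_scope.

Section C.
Variable R : rcfType.
Implicit Types x y : R[i].
Lemma ReM x y : complex.Re (x * y) = complex.Re x * complex.Re y - complex.Im x * complex.Im y.
Proof. by case: x y => [a b] [c d]. Qed.
Lemma ImM x y : complex.Im (x * y) = complex.Re x * complex.Im y + complex.Im x * complex.Re y.
Proof. by case: x y => [a b] [c d]. Qed.
Lemma ReD x y : complex.Re (x + y) = complex.Re x + complex.Re y.
Proof. by case: x y => [a b] [c d]. Qed.
Lemma ImD x y : complex.Im (x + y) = complex.Im x + complex.Im y.
Proof. by case: x y => [a b] [c d]. Qed.
Lemma ReN x : complex.Re (- x) = - complex.Re x.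
Proof. by case: x. Qed.
Lemma ImN x : complex.Im (- x) = - complex.Im x.
Proof. by case: x. Qed.
Lemma ReJ x : complex.Re (conjc x) = complex.Re x.
Proof. by case: x. Qed.
Lemma ImJ x : complex.Im (conjc x) = - complex.Im x.
Proof. by case: x. Qed.
Lemma ReC (k : R) : complex.Re (k%:C) = k. Proof. by []. Qed.
Lemma ImC (k : R) : complex.Im (k%:C) = 0. Proof. by []. Qed.
Lemma Re1 : complex.Re (1 : R[i]) = 1. Proof. by []. Qed.
Lemma Im1 : complex.Im (1 : R[i]) = 0. Proof. by []. Qed.
Lemma Re0 : complex.Re (0 : R[i]) = 0. Proof. by []. Qed.
Lemma Im0 : complex.Im (0 : R[i]) = 0. Proof. by []. Qed.
Lemma Rei : complex.Re ('i : R[i]) = 0. Proof. by []. Qed.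
Lemma Imi : complex.Im ('i : R[i]) = 1. Proof. by []. Qed.
Lemma ReB x y : complex.Re (x - y) = complex.Re x - complex.Re y.
Proof. by rewrite ReD ReN. Qed.
Lemma ImB x y : complex.Im (x - y) = complex.Im x - complex.Im y.
Proof. by rewrite ImD ImN. Qed.
Lemma cplxP x y : complex.Re x = complex.Re y -> complex.Im x = complex.Im y -> x = y.
Proof. by case: x y => [a b] [c d] /= -> ->. Qed.
Lemma cgeP x : 0 <= x -> complex.Im x = 0 /\ 0 <= complex.Re x.
Proof. by rewrite lecE => /andP[/eqP -> ->]. Qed.
Lemma conjD x y : conjc (x + y) = conjc x + conjc y.
Proof. by apply: cplxP; rewrite !(ReD, ImD, ReJ, ImJ) // opprD. Qed.
Lemma conjM x y : conjc (x * y) = conjc x * conjc y.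
Proof. apply: cplxP; rewrite !(ReM, ImM, ReJ, ImJ); ring. Qed.
Lemma conjN x : conjc (- x) = - conjc x.
Proof. by apply: cplxP; rewrite !(ReN, ImN, ReJ, ImJ). Qed.
Lemma conjK x : conjc (conjc x) = x.
Proof. by apply: cplxP; rewrite !(ReJ, ImJ) ?opprK. Qed.
Lemma conj0 : conjc (0 : R[i]) = 0.
Proof. by apply: cplxP; rewrite !(ReJ, ImJ) //= oppr0. Qed.
Lemma ReCx (a b : R) : complex.Re (a +i* b) = a. Proof. by []. Qed.
Lemma ImCx (a b : R) : complex.Im (a +i* b) = b. Proof. by []. Qed.
Lemma conjR (k : R) : conjc (k%:C) = k%:C.
Proof. by apply: cplxP; rewrite /= ?oppr0. Qed.
Lemma realCM (k l : R) : (k * l)%:C = k%:C * l%:C.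
Proof. by apply: cplxP; rewrite /= ?mul0r ?mulr0 ?subr0 ?addr0. Qed.
Definition reE := (ReCx, ImCx, ReM, ImM, ReD, ImD, ReN, ImN, ReJ, ImJ, ReC, ImC, Re1, Im1, Re0, Im0, Rei, Imi).
Lemma test (a b : R[i]) : a * conjc b + conjc a * b = (2 * complex.Re (a * conjc b))%:C.
Proof. apply: cplxP; rewrite !reE /=; ring. Qed.
End C.

End T1.
Import T1.

Module P1.
Set Implicit Arguments. Unset Strict Implicit. Unset Printing Implicit Defensive.
Import numFieldNormedType.Exports.
Local Open Scope ring_scope.
Local Open Scope complex_scope.
Local Open Scope classical_set_scope.

Section Core.
Variables (R : realType) (H : lmodType R[i]) (ip : H -> H -> R[i]).
Hypothesis hip : is_inner_product ip.

Definition n2 (x : H) : R := complex.Re (ip x x).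

Lemma ipZDl a x y z : ip (a *: x + y) z = a * ip x z + ip y z.
Proof. by move: hip; rewrite /is_inner_product => -[h1 h2 h3 h4]; apply: h1. Qed.
Lemma ipC x y : ip y x = conjc (ip x y).
Proof. by move: hip; rewrite /is_inner_product => -[h1 h2 h3 h4]; apply: h2. Qed.
Lemma ip_ge0 x : 0 <= ip x x.
Proof. by move: hip; rewrite /is_inner_product => -[h1 h2 h3 h4]; apply: h3. Qed.
Lemma ip_eq0 x : ip x x = 0 -> x = 0.
Proof. by move: hip; rewrite /is_inner_product => -[h1 h2 h3 h4]; apply: h4. Qed.

Lemma ip0l z : ip 0 z = 0.
Proof.
have h := ipZDl 1 0 0 z; rewrite scaler0 addr0 mul1r in h.
have := congr1 (fun t => t - ip 0 z) h; rewrite subrr addrK => h'.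
by rewrite -h'.
Qed.
Lemma ipDl x y z : ip (x + y) z = ip x z + ip y z.
Proof. by rewrite -[x]scale1r ipZDl mul1r scale1r. Qed.
Lemma ipZl a x z : ip (a *: x) z = a * ip x z.
Proof. by rewrite -[a *: x]addr0 ipZDl ip0l addr0. Qed.
Lemma ipNl x z : ip (- x) z = - ip x z.
Proof. by rewrite -scaleN1r ipZl mulN1r. Qed.
Lemma ipBl x y z : ip (x - y) z = ip x z - ip y z.
Proof. by rewrite ipDl ipNl. Qed.
Lemma ipDr x y z : ip z (x + y) = ip z x + ip z y.
Proof. by rewrite ipC ipDl conjD -!ipC. Qed.
Lemma ipZr a x z : ip z (a *: x) = conjc a * ip z x.
Proof. by rewrite ipC ipZl conjM -ipC. Qed.
Lemma ipNr x z : ip z (- x) = - ip z x.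
Proof. by rewrite ipC ipNl conjN -ipC. Qed.
Lemma ipBr x y z : ip z (x - y) = ip z x - ip z y.
Proof. by rewrite ipDr ipNr. Qed.
Lemma ip0r z : ip z 0 = 0.
Proof. by rewrite ipC ip0l conj0. Qed.

Definition ipE := (ipDl, ipDr, ipNl, ipNr, ipZl, ipZr, ipBl, ipBr, ip0l, ip0r).

Lemma Im_ipxx x : complex.Im (ip x x) = 0.
Proof. by have [] := cgeP (ip_ge0 x). Qed.
Lemma n2_ge0 x : 0 <= n2 x.
Proof. by have [] := cgeP (ip_ge0 x). Qed.

Lemma re_ip_le u v (k : R) : 0 < k ->
  2 * complex.Re (ip u v) <= k * n2 u + k^-1 * n2 v.
Proof.
move=> k0.
have h := n2_ge0 (k%:C *: u - v).
move: h; rewrite /n2 !ipE !reE -/(n2 u) -/(n2 v).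
have -> : complex.Re (ip v u) = complex.Re (ip u v) by rewrite ipC ReJ.
have -> : complex.Im (ip v u) = - complex.Im (ip u v) by rewrite ipC ImJ.
rewrite !Im_ipxx => h.
have hk : k * k^-1 = 1 by rewrite mulfV // gt_eqF.
have hk' : 0 < k^-1 by rewrite invr_gt0.
have e : k * (k^-1 * n2 v) = n2 v by rewrite mulrA hk mul1r.
rewrite -(ler_pM2l k0) mulrDr e.
rewrite ?(mul0r, mulr0, oppr0, subr0, addr0, mulrN, mulNr, opprK) in h.
nra.
Qed.



Lemma Tbound (T : H -> H) (c : R) : 0 < c ->
  (forall x y, T (x + y) = T x + T y) ->
  (forall x y, ip (T x) y = ip x (T y)) ->
  (forall z, `|complex.Re (ip (T z) z)| <= c * n2 z) ->
  forall x, n2 (T x) <= c ^+ 2 * n2 x.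
Proof.
move=> c0 Tadd Tsym Tb x.
have T0 : T 0 = 0.
  have h := Tadd 0 0; rewrite addr0 in h.
  have := congr1 (fun t => t - T 0) h; rewrite subrr addrK => h'.
  by rewrite -h'.
have TN y : T (- y) = - T y.
  have h := Tadd y (- y); rewrite subrr T0 in h.
  by apply/eqP; rewrite -addr_eq0 addrC -h.
pose k := c^-1.
have kc : k * c = 1 by rewrite mulVf ?gt_eqF.
have k0 : 0 < k by rewrite invr_gt0.
pose y := k%:C *: T x.
have h1 := Tb (x + y); have h2 := Tb (x - y).
rewrite Tadd ler_norml in h1; rewrite Tadd TN ler_norml in h2.
move: h1 h2 => /andP[_ h1] /andP[h2 _].
have e1 : ip (T x + T y) (x + y) - ip (T x + - T y) (x - y)
    = 2%:R * (ip (T x) y + ip (T y) x).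
  by rewrite !ipE; ring.
have e2 : ip (x + y) (x + y) + ip (x - y) (x - y) = 2%:R * (ip x x + ip y y).
  by rewrite !ipE; ring.
have e3 : ip (T x) y = k%:C * ip (T x) (T x) by rewrite /y ipZr conjR.
have e4 : ip (T y) x = k%:C * ip (T x) (T x) by rewrite Tsym ipC /y ipZr conjR conjM conjR -ipC.
have e5 : ip y y = (k * k)%:C * ip (T x) (T x).
  by rewrite /y ipZl ipZr conjR mulrA -rmorphM.
have hN := Im_ipxx (T x); have hM := Im_ipxx x.
have r1 : complex.Re (ip (T x + T y) (x + y)) - complex.Re (ip (T x + - T y) (x - y))
    = 4 * k * n2 (T x).
  rewrite -ReB e1 e3 e4 /n2 !reE hN; ring.
have r2 : n2 (x + y) + n2 (x - y) = 2 * n2 x + 2 * (k * k) * n2 (T x).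
  rewrite /n2 -ReD e2 e5 /n2 !reE hN hM; ring.
have : 4 * k * n2 (T x) <= c * (2 * n2 x + 2 * (k * k) * n2 (T x)).
  by rewrite -r2 -r1 mulrDr; lra.
move=> hh.
have := hh; rewrite -(ler_pM2l c0).
have -> : c * (4 * k * n2 (T x)) = 4 * (k * c) * n2 (T x) by ring.
have -> : c * (c * (2 * n2 x + 2 * (k * k) * n2 (T x)))
  = 2 * c ^+ 2 * n2 x + 2 * ((k * c) * (k * c)) * n2 (T x) by ring.
rewrite kc; lra.
Qed.


Lemma n2_scale_unit (w : R[i]) u : w * conjc w = 1 -> n2 (w *: u) = n2 u.
Proof. by move=> hw; rewrite /n2 ipZl ipZr mulrA hw mul1r. Qed.

Lemma core (B B' D : H -> H) (a b : R) : 0 < a -> 0 < b ->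
  (forall x y, B (x + y) = B x + B y) -> (forall x y, B' (x + y) = B' x + B' y) ->
  (forall x y, ip (B x) y = ip x (B' y)) ->
  (forall z, `|complex.Re (ip (B z) z)| <= a * n2 z) ->
  (forall z, `|complex.Im (ip (B z) z)| <= b * n2 z) ->
  (forall x y, ip (D x) y = ip (B x) (B y) - ip (B' x) (B' y)) ->
  forall x, n2 (D x) <= (4 * a * b) ^+ 2 * n2 x.
Proof.
move=> a0 b0 Badd B'add adj hRe hIm hD x.
have adj' u v : ip u (B v) = ip (B' u) v by rewrite ipC adj -ipC.
pose c1 : R[i] := (2^-1)%:C.
pose c2 : R[i] := (0:R) +i* (- 2^-1).
have cc1 : conjc c1 = c1 by rewrite /c1 conjR.
have cc2 : conjc c2 = - c2 by apply: cplxP; rewrite /c2 !reE ?oppr0.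
pose X z := c1 *: (B z + B' z).
pose Y z := c2 *: (B z - B' z).
have Xadd u v : X (u + v) = X u + X v.
  by rewrite /X Badd B'add -scalerDr addrACA.
have Yadd u v : Y (u + v) = Y u + Y v.
  by rewrite /Y Badd B'add -scalerDr opprD addrACA.
have Xsym u v : ip (X u) v = ip u (X v).
  rewrite /X !ipE cc1 adj adj'; ring.
have Ysym u v : ip (Y u) v = ip u (Y v).
  rewrite /Y !ipE cc2 adj adj'; ring.
have XRe z : complex.Re (ip (X z) z) = complex.Re (ip (B z) z).
  rewrite /X !ipE -adj' ipC /c1 !reE; by field.
have YRe z : complex.Re (ip (Y z) z) = complex.Im (ip (B z) z).
  rewrite /Y !ipE -adj' ipC /c2 !reE; by field.
have hX : forall t, n2 (X t) <= a ^+ 2 * n2 t.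
  by apply: Tbound => // t; rewrite XRe; exact: hRe.
have hY : forall t, n2 (Y t) <= b ^+ 2 * n2 t.
  by apply: Tbound => // t; rewrite YRe; exact: hIm.
set y := D x.
pose w1 := ip (Y x) (X y). pose w2 := ip (X x) (Y y).
have eD : ip (D x) y = ((0:R) +i* 2) * (w1 - w2).
  rewrite hD /w1 /w2 /X /Y !ipE cc1 cc2; apply: cplxP; rewrite /c1 /c2 !reE; by field.
have eN : n2 (D x) = - 2 * complex.Im w1 + 2 * complex.Im w2.
  rewrite /n2 -/y eD !reE; ring.
have ui : 'i * conjc 'i = 1 :> R[i] by apply: cplxP; rewrite !reE; ring.
have umi : ((0:R) +i* -1) * conjc ((0:R) +i* -1) = 1 :> R[i].
  by apply: cplxP; rewrite !reE; ring.
have ka : 0 < 4 * a ^+ 2 by rewrite mulr_gt0 // exprn_gt0.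
have kb : 0 < 4 * b ^+ 2 by rewrite mulr_gt0 // exprn_gt0.
have b1 := re_ip_le ('i *: Y x) (X y) ka.
have b2 := re_ip_le (((0:R) +i* -1) *: X x) (Y y) kb.
rewrite (n2_scale_unit (Y x) ui) ipZl -/w1 in b1.
rewrite (n2_scale_unit (X x) umi) ipZl -/w2 in b2.
rewrite !reE in b1 b2.
have hYx := hY x; have hXy := hX y; have hXx := hX x; have hYy := hY y.
have M0 := n2_ge0 x; have N0 := n2_ge0 y.
have i1 : 4 * a ^+ 2 * n2 (Y x) <= 4 * a ^+ 2 * (b ^+ 2 * n2 x).
  by rewrite ler_pM2l.
have i2 : (4 * a ^+ 2)^-1 * n2 (X y) <= (4 * a ^+ 2)^-1 * (a ^+ 2 * n2 y).
  by rewrite ler_pM2l // invr_gt0.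
have i3 : 4 * b ^+ 2 * n2 (X x) <= 4 * b ^+ 2 * (a ^+ 2 * n2 x).
  by rewrite ler_pM2l.
have i4 : (4 * b ^+ 2)^-1 * n2 (Y y) <= (4 * b ^+ 2)^-1 * (b ^+ 2 * n2 y).
  by rewrite ler_pM2l // invr_gt0.
have q1 : (4 * a ^+ 2)^-1 * (a ^+ 2 * n2 y) = n2 y / 4.
  by field; rewrite gt_eqF.
have q2 : (4 * b ^+ 2)^-1 * (b ^+ 2 * n2 y) = n2 y / 4.
  by field; rewrite gt_eqF.
have q3 : (4 * a * b) ^+ 2 * n2 x = 16 * (a ^+ 2 * (b ^+ 2 * n2 x)) by ring.
have q4 : 4 * b ^+ 2 * (a ^+ 2 * n2 x) = 4 * (a ^+ 2 * (b ^+ 2 * n2 x)) by ring.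
have q5 : 4 * a ^+ 2 * (b ^+ 2 * n2 x) = 4 * (a ^+ 2 * (b ^+ 2 * n2 x)) by ring.
rewrite q1 in i2; rewrite q2 in i4; rewrite q4 in i3; rewrite q5 in i1.
rewrite q3 -/y eN.
rewrite eN in N0 *.
lra.
Qed.

End Core.

Lemma opnorm_bound (R : realType) (H : lmodType R[i]) (ip : H -> H -> R[i])
  (A Astar : H -> H) (cx cy a b p q : R) :
  is_inner_product ip -> linear A -> is_adjoint ip A Astar -> 0 < a -> 0 < b ->
  p ^+ 2 + q ^+ 2 = 1 ->
  (@toR2 R @` numerical_range ip A `<=` ellipse_region cx cy a b p q) ->
  opnorm ip (fun x => Astar (A x) - A (Astar x)) <= 4 * a * b.
Proof.
move=> hip hA adjA a0 b0 hpq hsub.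
have AD u v : A (u + v) = A u + A v by have := hA 1 u v; rewrite !scale1r.
have A0 : A 0 = 0.
  have h := AD 0 0; rewrite addr0 in h.
  have := congr1 (fun t => t - A 0) h; rewrite subrr addrK => h'.
  by rewrite -h'.
have AZ k u : A (k *: u) = k *: A u by have := hA k u 0; rewrite !addr0 A0 addr0.
have adj2 x y : ip (Astar x) y = ip x (A y).
  by rewrite (ipC hip) -adjA -(ipC hip).
have ipeq w1 w2 : (forall z, ip z w1 = ip z w2) -> w1 = w2.
  move=> h; apply/eqP; rewrite -subr_eq0; apply/eqP; apply: (ip_eq0 hip).
  by rewrite (ipBr hip) h subrr.
have AsD u v : Astar (u + v) = Astar u + Astar v.
  by apply: ipeq => z; rewrite (ipDr hip) -!adjA (ipDr hip).
pose w : R[i] := p +i* q.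
pose c : R[i] := cx +i* cy.
have hw : conjc w * w = 1.
  by apply: cplxP; rewrite !reE; [rewrite -hpq; ring | ring].
pose B z := conjc w *: (A z - c *: z).
pose B' z := w *: (Astar z - conjc c *: z).
pose D z := Astar (A z) - A (Astar z).
have Badd x y : B (x + y) = B x + B y.
  rewrite /B -scalerDr; congr (_ *: _).
  by rewrite AD scalerDr opprD addrACA.
have B'add x y : B' (x + y) = B' x + B' y.
  rewrite /B' -scalerDr; congr (_ *: _).
  by rewrite AsD scalerDr opprD addrACA.
have adjB x y : ip (B x) y = ip x (B' y).
  rewrite /B /B' !(ipE hip) conjK adjA; ring.
have hD x y : ip (D x) y = ip (B x) (B y) - ip (B' x) (B' y).
  rewrite /D (ipBl hip) (adj2 (A x) y) (adjA (Astar x) y).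
  rewrite /B /B' !(ipE hip) !conjK -(adjA x y) (adj2 x y).
  rewrite -[LHS]mul1r -{1}hw; ring.
have hell z : exists s t, s ^+ 2 <= a ^+ 2 /\ t ^+ 2 <= b ^+ 2 /\
    ip (B z) z = (n2 ip z * s) +i* (n2 ip z * t).
  have m0 := n2_ge0 hip z.
  case: (eqVneq (n2 ip z) 0) => hz.
    have z0 : z = 0.
      apply: (ip_eq0 hip); apply: cplxP; [by rewrite -/(n2 ip z) hz | by rewrite (Im_ipxx hip)].
    exists 0, 0; split; first by rewrite expr0n /= exprn_ge0 // ltW.
    split; first by rewrite expr0n /= exprn_ge0 // ltW.
    by rewrite z0 (ip0r hip); apply: cplxP; rewrite !reE mulr0.
  set m := n2 ip z in m0 hz *.
  have mpos : 0 < m by rewrite lt_def hz m0.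
  pose r := Num.sqrt m.
  have r0 : 0 < r by rewrite sqrtr_gt0.
  have mr : m = r ^+ 2 by rewrite sqr_sqrtr.
  pose k := r^-1.
  have kkm : k * k * m = 1 by rewrite /k mr; field; rewrite gt_eqF.
  pose u := k%:C *: z.
  have ezz : ip z z = m%:C by apply: cplxP; rewrite ?reE ?(Im_ipxx hip).
  have huu : ip u u = (k * k * m)%:C.
    by rewrite /u (ipZl hip) (ipZr hip) conjR ezz mulrA -!realCM.
  have hu : hnorm ip u = 1 by rewrite /hnorm huu kkm /= sqrtr1.
  have : toR2 (ip (A u) u) \in ellipse_region cx cy a b p q.
    by rewrite inE; apply: hsub; exists (ip (A u) u) => //; exists u.
  rewrite inE => -[s [t [hst]]].
  pose e := ip (A z) z.
  have eAu : ip (A u) u = (k * k)%:C * e.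
    by rewrite /u AZ (ipZl hip) (ipZr hip) conjR mulrA -realCM.
  rewrite /toR2 eAu => -[eR eI].
  rewrite !reE mul0r ?subr0 ?addr0 in eR eI.
  have eR' : complex.Re e = m * (cx + p * s - q * t).
    by rewrite -eR -[LHS]mul1r -kkm; ring.
  have eI' : complex.Im e = m * (cy + q * s + p * t).
    by rewrite -eI -[LHS]mul1r -kkm; ring.
  have t2 : 0 <= (t / b) ^+ 2 by apply: sqr_ge0.
  have s2 : 0 <= (s / a) ^+ 2 by apply: sqr_ge0.
  exists s, t; split.
    have : (s / a) ^+ 2 <= 1 by lra.
    by rewrite expr_div_n ler_pdivrMr ?exprn_gt0 // mul1r.
  split.
    have : (t / b) ^+ 2 <= 1 by lra.
    by rewrite expr_div_n ler_pdivrMr ?exprn_gt0 // mul1r.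
  rewrite /B (ipZl hip) (ipBl hip) (ipZl hip) ezz -/e.
  apply: cplxP; rewrite !reE eR' eI'.
    by rewrite -[RHS]mulr1 -hpq; ring.
  by rewrite -[RHS]mulr1 -hpq; ring.
have hRe z : `|complex.Re (ip (B z) z)| <= a * n2 ip z.
  have [s [t [hs [ht ->]]]] := hell z; rewrite ReCx normrM ger0_norm ?n2_ge0 //.
  rewrite mulrC ler_wpM2r ?n2_ge0 // ler_norml; apply/andP; split; nra.
have hIm z : `|complex.Im (ip (B z) z)| <= b * n2 ip z.
  have [s [t [hs [ht ->]]]] := hell z; rewrite ImCx normrM ger0_norm ?n2_ge0 //.
  rewrite mulrC ler_wpM2r ?n2_ge0 // ler_norml; apply/andP; split; nra.
have bnd x : hnorm ip x <= 1 -> hnorm ip (D x) <= 4 * a * b.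
  move=> hx.
  have hx' : n2 ip x <= 1 by move: hx; rewrite /hnorm -{1}sqrtr1 ler_sqrt.
  have hc := core hip a0 b0 Badd B'add adjB hRe hIm hD x.
  have hab : 0 <= 4 * a * b by rewrite !mulr_ge0 // ltW.
  apply: (le_trans (y := Num.sqrt ((4 * a * b) ^+ 2 * n2 ip x))).
    by rewrite /hnorm ler_sqrt // mulr_ge0 ?sqr_ge0 ?n2_ge0.
  rewrite -[X in _ <= X](@ger0_norm _ (4 * a * b)) // -sqrtr_sqr ler_sqrt ?sqr_ge0 //.
  by rewrite -[X in _ <= X]mulr1 ler_wpM2l // sqr_ge0.
rewrite /opnorm; apply: ge_sup.
  exists (hnorm ip (D 0)); exists 0 => //.
  by rewrite /= /hnorm (ip0l hip) sqrtr0 ler01.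
by move=> _ [x hx <-]; exact: bnd.
Qed.

End P1.
Import P1.

Module P2a.
Set Implicit Arguments. Unset Strict Implicit. Unset Printing Implicit Defensive.
Import numFieldNormedType.Exports.
Local Open Scope classical_set_scope.
Local Open Scope ring_scope.

Lemma leb_mono (R : realType) (A B : set R) : A `<=` B ->
  (@lebesgue_measure R A <= @lebesgue_measure R B)%E.
Proof.
move=> AB. rewrite /lebesgue_measure /lebesgue_stieltjes_measure /measure_extension.
exact: le_outer_measure.
Qed.

Lemma le_integral_nm d (T : measurableType d) (R : realType)
  (mu : {measure set T -> \bar R}) (f g : T -> \bar R) :
  (forall x, (0 <= f x)%E) -> (forall x, f x <= g x)%E ->
  (\int[mu]_x f x <= \int[mu]_x g x)%E.
Proof.
move=> f0 fg.
have g0 x : (0 <= g x)%E by apply: le_trans (fg x).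
rewrite !ge0_integralTE //.
apply: le_ereal_sup => _ [h hf <-]; exists h => //= x.
exact: le_trans (fg x).
Qed.

End P2a.
Import P2a.

Module P2b.
Set Implicit Arguments. Unset Strict Implicit. Unset Printing Implicit Defensive.
Import numFieldNormedType.Exports.
Local Open Scope classical_set_scope.
Local Open Scope ring_scope.

Section G.
Variable R : realType.
Definition Gc (r : R) := r * Num.sqrt (1 - r ^+ 2) + asin r.

Lemma isd_der (x d : R) (g : R -> R) : is_derive x 1 g d -> derivable g x 1.
Proof. by case. Qed.

Lemma dq1 (r : R) : is_derive r 1 (fun y : R => 1 - y ^+ 2) (- (2 * r)).
Proof.
apply: is_derive_eq.
by rewrite add0r mul1r -[r%:A]/(r * 1) mulr1 -mulr2n mulr_natl.
Qed.

Lemma dGc (r : R) : -1 < r < 1 -> is_derive r 1 Gc (2 * Num.sqrt (1 - r ^+ 2)).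
Proof.
move=> hr.
have h1 : 0 < 1 - r ^+ 2 by case/andP: hr => ha hb; nra.
have d1 : is_derive r 1 (fun y : R => 1 - y ^+ 2) (- (2 * r)).
  apply: is_derive_eq.
  by rewrite add0r mul1r -[r%:A]/(r * 1) mulr1 -mulr2n mulr_natl.
have d2 := is_derive1_comp (f:=Num.sqrt) (g:=fun y : R => 1 - y ^+ 2) (x:=r) (is_derive1_sqrt h1) d1.
have d3 := is_deriveM (is_derive_id r 1) d2.
have d4 := is_derive1_asin hr.
have d5 := is_deriveD d3 d4.
have d6 : is_derive r 1 (((@id R) * (Num.sqrt \o (fun y => 1 - y ^+ 2))) + @asin R)
   (2 * Num.sqrt (1 - r ^+ 2)).
  apply: (is_derive_eq d5).
  rewrite -[r *: _]/(r * _) -[(_)%:A]/(_ * 1).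
  rewrite -[(Num.sqrt \o _) r]/(Num.sqrt (1 - r ^+ 2)).
  set s := Num.sqrt (1 - r ^+ 2).
  have s0 : 0 < s by rewrite sqrtr_gt0.
  have hs : s ^+ 2 = 1 - r ^+ 2 by rewrite sqr_sqrtr // ltW.
  have sn : s != 0 by rewrite gt_eqF.
  have e1 : r * ((2 * s)^-1 * - (2 * r)) = - (r ^+ 2) / s by field.
  have hr2 : r ^+ 2 = 1 - s ^+ 2 by rewrite hs; ring.
  rewrite e1 hr2; by field.
have -> : Gc = ((@id R) * (Num.sqrt \o (fun y => 1 - y ^+ 2))) + @asin R.
  by apply/funext => y.
exact: d6.
Qed.

Lemma Gc_val (t : R) : - (pi / 2) <= t <= pi / 2 ->
  Gc (sin t) = sin t * cos t + t.
Proof.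
move=> ht.
rewrite /Gc sinK ?in_itv //= sin2cos2 opprB addrCA subrr addr0 sqrtr_sqr.
by rewrite ger0_norm // cos_ge0_pihalf.
Qed.

Lemma int_circ (cx W c t : R) : 0 < W -> 0 < t -> t < pi / 2 ->
  (\int[lebesgue_measure]_(x in `[(cx - W * sin t)%R, (cx + W * sin t)%R])
     ((c * Num.sqrt (1 - ((x - cx) / W) ^+ 2))%R)%:E
   = ((c * W * (sin t * cos t + t))%R)%:E)%E.
Proof.
move=> W0 t0 tpi.
have pi0 : 0 < pi :> R := pi_gt0 R.
have s0 : 0 < sin t by apply: sin_gt0_pihalf; rewrite t0 tpi.
have c0 : 0 < cos t by apply: cos_gt0_pihalf; rewrite tpi andbT; lra.
have s1 : sin t < 1.
  have := cos2Dsin2 t => h.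
  have : sin t ^+ 2 < 1 by nra.
  by move=> h2; nra.
pose rr := fun y : R => (y - cx) / W.
have drr (x : R) : is_derive x 1 rr (W^-1).
  rewrite /rr; apply: is_derive_eq.
  by rewrite scaler0 add0r subr0 -[W^-1 *: 1]/(W^-1 * 1) mulr1.
have hrr x : cx - W * sin t <= x <= cx + W * sin t -> -1 < rr x < 1.
  case/andP=> h1 h2.
  have hu : rr x * W = x - cx by rewrite /rr; field; rewrite gt_eqF.
  apply/andP; split; nra.
pose F := (c * W / 2) \*: (Gc \o rr).
pose f := c \*: (Num.sqrt \o ((fun y : R => 1 - y ^+ 2) \o rr)).
have dF x : -1 < rr x < 1 -> is_derive x 1 F (c * Num.sqrt (1 - rr x ^+ 2)).
  move=> hx.
  have dG := is_derive1_comp (f:=Gc) (g:=rr) (x:=x) (dGc hx) (drr x).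
  have h := is_deriveZ (c * W / 2) dG.
  apply: (is_derive_eq h).
  by rewrite -[_ *: _]/(_ * _); field; rewrite gt_eqF.
have df x : -1 < rr x < 1 -> derivable f x 1.
  move=> hx.
  have h1 : 0 < 1 - rr x ^+ 2 by case/andP: hx => ha hb; nra.
  have dq := is_derive1_comp (f:=fun y : R => 1 - y ^+ 2) (g:=rr) (x:=x) (dq1 (rr x)) (drr x).
  have ds := is_derive1_comp (f:=Num.sqrt) (g:=(fun y : R => 1 - y ^+ 2) \o rr) (x:=x) (is_derive1_sqrt h1) dq.
  exact: (isd_der (is_deriveZ c ds)).
have Wt : 0 < W * sin t by rewrite mulr_gt0.
have ab : cx - W * sin t < cx + W * sin t by lra.
have fc : {within `[(cx - W * sin t)%R, (cx + W * sin t)%R], continuous f}.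
  apply: continuous_in_subspaceT => x; rewrite inE /= in_itv /= => hx.
  by apply: differentiable_continuous; apply/derivable1_diffP; exact: df (hrr x hx).
have FLR : derivable_oo_LRcontinuous F (cx - W * sin t) (cx + W * sin t).
  split.
  - move=> x; rewrite in_itv /= => /andP[h1 h2].
    by apply: isd_der (dF x (hrr x _)); rewrite !ltW.
  - apply: cvg_at_right_filter; apply: differentiable_continuous; apply/derivable1_diffP.
    by apply: isd_der (dF _ (hrr _ _)); rewrite lexx ltW.
  - apply: cvg_at_left_filter; apply: differentiable_continuous; apply/derivable1_diffP.
    by apply: isd_der (dF _ (hrr _ _)); rewrite lexx ltW.
have Fd : {in `](cx - W * sin t)%R, (cx + W * sin t)%R[, derive1 F =1 f}.
  move=> x; rewrite in_itv /= => /andP[h1 h2].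
  have hx : -1 < rr x < 1 by apply: hrr; rewrite !ltW.
  have h := dF x hx.
  by rewrite derive1E derive_val.
have h := continuous_FTC2 ab fc FLR Fd.
transitivity ((F (cx + W * sin t))%:E - (F (cx - W * sin t))%:E)%E; first exact: h.
rewrite -EFinB; congr (_%:E).
have rb : rr (cx + W * sin t) = sin t by rewrite /rr; field; rewrite gt_eqF.
have ra : rr (cx - W * sin t) = sin (- t) by rewrite sinN /rr; field; rewrite gt_eqF.
have Fb : F (cx + W * sin t) = c * W / 2 * Gc (sin t).
  by rewrite /F /= rb.
have Fa : F (cx - W * sin t) = c * W / 2 * Gc (sin (- t)).
  by rewrite /F /= ra.
rewrite Fb Fa !Gc_val; last 2 first.
- by apply/andP; split; lra.
- by apply/andP; split; lra.
by rewrite sinN cosN; field.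
Qed.

End G.

End P2b.
Import P2b.

Module P2c.
Set Implicit Arguments. Unset Strict Implicit. Unset Printing Implicit Defensive.
Import numFieldNormedType.Exports.
Local Open Scope classical_set_scope.
Local Open Scope ring_scope.

Lemma sect_lemma (R : realType) (cx cy a b p q x : R) : 0 < a -> 0 < b ->
  p ^+ 2 + q ^+ 2 = 1 ->
  let al := (q / a) ^+ 2 + (p / b) ^+ 2 in
  let W := a * b * Num.sqrt al in
  let u := x - cx in
  let y0 := cy - (p * q / a ^+ 2 - p * q / b ^+ 2) * u / al in
  let h := Num.sqrt (1 - (u / W) ^+ 2) / Num.sqrt al in
  0 < al -> (u / W) ^+ 2 <= 1 ->
  `[(y0 - h)%R, (y0 + h)%R] `<=` xsection (ellipse_region cx cy a b p q) x.
Proof.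
move=> a0 b0 hpq al W u y0 h al0 hu y.
rewrite /= in_itv /= => /andP[hy1 hy2].
rewrite /xsection /= inE.
pose v := y - cy.
pose s := p * u + q * v.
pose t := - q * u + p * v.
exists s, t; split; last first.
  congr pair.
    have -> : cx + p * s - q * t = cx + (p ^+ 2 + q ^+ 2) * u by rewrite /s /t; ring.
    by rewrite hpq mul1r /u addrC subrK.
  have -> : cy + q * s + p * t = cy + (p ^+ 2 + q ^+ 2) * v by rewrite /s /t; ring.
  by rewrite hpq mul1r /v addrC subrK.
have sa0 : 0 < Num.sqrt al by rewrite sqrtr_gt0.
have hW : W ^+ 2 = a ^+ 2 * b ^+ 2 * al.
  by rewrite /W !exprMn sqr_sqrtr // ltW.
have W0 : 0 < W by rewrite /W !mulr_gt0.
have key : (s / a) ^+ 2 + (t / b) ^+ 2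
    = al * (y - y0) ^+ 2 + (p ^+ 2 + q ^+ 2) ^+ 2 * (u / W) ^+ 2.
  rewrite !expr_div_n hW /s /t /y0 /v /al.
  field.
  have e : (q * b) ^+ 2 + (p * a) ^+ 2 = al * (a * b) ^+ 2.
    by rewrite /al; field; rewrite !gt_eqF.
  by rewrite !gt_eqF //= e mulr_gt0 // exprn_gt0 // mulr_gt0.
rewrite key hpq expr1n mul1r.
have h0 : 0 <= h by rewrite /h divr_ge0 // sqrtr_ge0.
have hh : h ^+ 2 * al = 1 - (u / W) ^+ 2.
  rewrite /h expr_div_n !sqr_sqrtr ?subr_ge0 // ?ltW //.
  by field; rewrite !gt_eqF.
have : (y - y0) ^+ 2 <= h ^+ 2 by nra.
move=> hyy.
have h2 : al * (y - y0) ^+ 2 <= al * h ^+ 2 by rewrite ler_pM2l.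
have hh' : al * h ^+ 2 = 1 - (u / W) ^+ 2 by rewrite mulrC hh.
lra.
Qed.

Lemma area_lb (R : realType) (cx cy a b p q : R) : 0 < a -> 0 < b ->
  p ^+ 2 + q ^+ 2 = 1 ->
  ((pi * (a * b))%:E <= ((@lebesgue_measure R) \x (@lebesgue_measure R))%E
                           (ellipse_region cx cy a b p q))%E.
Proof.
move=> a0 b0 hpq.
set E := ellipse_region cx cy a b p q.
pose al := (q / a) ^+ 2 + (p / b) ^+ 2.
have al0 : 0 < al.
  have e : (q * b) ^+ 2 + (p * a) ^+ 2 = al * (a * b) ^+ 2.
    by rewrite /al; field; rewrite !gt_eqF.
  have : 0 < (q * b) ^+ 2 + (p * a) ^+ 2.
    rewrite !exprMn.
    have ha : 0 < a ^+ 2 by rewrite exprn_gt0.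
    have hb : 0 < b ^+ 2 by rewrite exprn_gt0.
    have hp : 0 <= p ^+ 2 := sqr_ge0 p.
    have hq : 0 <= q ^+ 2 := sqr_ge0 q.
    have h1 : 0 <= q ^+ 2 * b ^+ 2 by rewrite mulr_ge0 // ltW.
    have h2 : 0 <= p ^+ 2 * a ^+ 2 by rewrite mulr_ge0 // ltW.
    case: (lerP (1/2) (p ^+ 2)) => hp2.
      have : 0 < p ^+ 2 * a ^+ 2 by rewrite mulr_gt0 //; lra.
      lra.
    have : 0 < q ^+ 2 * b ^+ 2 by rewrite mulr_gt0 //; lra.
    lra.
  rewrite e => h; have hab : 0 < (a * b) ^+ 2 by rewrite exprn_gt0 // mulr_gt0.
  by rewrite -(pmulr_lgt0 _ hab).
have sa0 : 0 < Num.sqrt al by rewrite sqrtr_gt0.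
pose W := a * b * Num.sqrt al.
have W0 : 0 < W by rewrite /W !mulr_gt0.
pose c := 2 / Num.sqrt al.
have c0 : 0 <= c by rewrite /c divr_ge0 // ltW.
have cW : c * W = 2 * (a * b) by rewrite /c /W; field; rewrite gt_eqF.
pose A := ((@lebesgue_measure R) \x (@lebesgue_measure R))%E E.
have key t : 0 < t -> t < pi / 2 -> (((2 * (a * b) * t)%R)%:E <= A)%E.
  move=> t0 tpi.
  have hI := int_circ cx c W0 t0 tpi.
  rewrite integral_mkcond in hI.
  have st0 : 0 < sin t by apply: sin_gt0_pihalf; rewrite t0 tpi.
  have ct0 : 0 < cos t by apply: cos_gt0_pihalf; rewrite tpi andbT; lra.
  have st1 : sin t <= 1 := sin_le1 t.
  apply: (@le_trans _ _ ((c * W * (sin t * cos t + t))%R)%:E).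
    rewrite lee_fin cW ler_pM2l ?mulr_gt0 //.
    have : 0 < sin t * cos t by rewrite mulr_gt0.
    lra.
  rewrite -hI /A /product_measure1; apply: le_integral_nm.
    move=> x; rewrite patchE; case: ifP => // _.
    by rewrite lee_fin mulr_ge0 // sqrtr_ge0.
  move=> x; rewrite patchE; case: ifP => [xI|_]; last exact: measure_ge0.
  move: xI; rewrite inE /= in_itv /= => /andP[xI1 xI2].
  have hu : ((x - cx) / W) ^+ 2 <= 1.
    have hr : (x - cx) / W * W = x - cx by field; rewrite gt_eqF.
    set r := (x - cx) / W in hr *.
    have : r <= 1 by nra.
    have : -1 <= r by nra.
    move=> h1 h2; nra.
  have S := @sect_lemma R cx cy a b p q x a0 b0 hpq al0 hu.
  apply: le_trans (leb_mono S).
  have ch : c * Num.sqrt (1 - ((x - cx) / W) ^+ 2)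
      = 2 * (Num.sqrt (1 - ((x - cx) / W) ^+ 2) / Num.sqrt al).
    by rewrite /c; field; rewrite gt_eqF.
  rewrite lebesgue_measure_itv /= lte_fin ch.
  case: ifP => hlt.
    by rewrite -EFinB lee_fin; lra.
  move: hlt => /negbT; rewrite -leNgt => hle.
  by rewrite lee_fin; lra.
rewrite -/A; case hA : A => [r| |]; last 2 first.
- by rewrite leey.
- have pi0 : 0 < pi :> R := pi_gt0 R.
  have := key (pi / 4); rewrite hA leeNy_eq => h.
  by have := h ltac:(lra) ltac:(lra).
rewrite lee_fin.
have pi0 : 0 < pi :> R := pi_gt0 R.
have k0 : 0 < 2 * (a * b) by rewrite !mulr_gt0.
have r0 : 2 * (a * b) * (pi / 4) <= r.
  by have := key (pi / 4); rewrite hA lee_fin; apply; lra.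
case: (lerP (pi * (a * b)) r) => // hr.
pose z := r / (2 * (a * b)).
have hz : z * (2 * (a * b)) = r by rewrite /z; field; rewrite ?gt_eqF ?mulf_neq0 ?gt_eqF.
have := key ((z + pi / 2) / 2).
rewrite hA lee_fin.
have z0 : 0 < z by nra.
have zpi : z < pi / 2 by nra.
move=> /(_ ltac:(lra) ltac:(lra)).
nra.
Qed.

End P2c.
Import P2c.

Module Aux.
Import numFieldNormedType.Exports.
Lemma sub_ell (R : realType) (W : set R[i]) (cx cy a b p q : R) :
  closure (@toR2 R @` W)%classic = ellipse_region cx cy a b p q ->
  (@toR2 R @` W `<=` ellipse_region cx cy a b p q)%classic.
Proof. by move=> hcl; rewrite -hcl; apply: subset_closure. Qed.
End Aux.
Import Aux.

Theorem proposition5 (R : realType) (H : lmodType R[i]) (ip : H -> H -> R[i])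
  (A Astar : H -> H) :
  is_hilbert ip -> linear A -> bounded_op ip A -> is_adjoint ip A Astar ->
  elliptical (numerical_range ip A) ->
  ((opnorm ip (fun x => Astar (A x) - A (Astar x)))%:E
     <= (4 / pi)%:E * area (numerical_range ip A))%E.
Proof.
move=> [hip _] hA _ adjA [cx [cy [a [b [p [q [a0 b0 hpq hcl]]]]]]].
have hsub : (@toR2 R @` numerical_range ip A `<=` ellipse_region cx cy a b p q)%classic.
  exact: sub_ell hcl.
have h1 := @opnorm_bound R H ip A Astar cx cy a b p q hip hA adjA a0 b0 hpq hsub.
have h2 := @area_lb R cx cy a b p q a0 b0 hpq.
rewrite /area hcl.
have pi0 : 0 < pi :> R := pi_gt0 R.
apply: (@le_trans _ _ ((4 * a * b)%:E)); first by rewrite lee_fin.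
apply: (@le_trans _ _ ((4 / pi)%:E * (pi * (a * b))%:E)%E).
  have e : 4 / pi * (pi * (a * b)) = 4 * a * b.
    by rewrite -mulrA mulKf ?gt_eqF // mulrA.
  by rewrite -EFinM lee_fin e.
by apply: lee_wpmul2l => //; rewrite lee_fin divr_ge0 // ltW.
Qed.
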